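(* Let $\lambda$ be a positive integer with $\gcd(\lambda,n)=1$ and let $1\le j\le n-1$. Then $A/R_jA\cong A/R_{\lambda j}A$ as graded $\Bbbk$-vector spaces; equivalently $\bar e_jE\cong\bar e_{\lambda j}E$ as graded vector spaces. In particular, if $n$ is prime then $\bar e_1E\cong\bar e_jE$ for all $j=2,\dots,n-1$.
   Context: $\Bbbk$ is an algebraically closed field of characteristic zero, $n\ge2$, $A=\Bbbk_{-1}[x_0,\dots,x_{n-1}]$ is generated by degree-one $x_0,\dots,x_{n-1}$ with $x_ix_j=-x_jx_i$ ($i\ne j$), $C_n=\langle\sigma\rangle$ acts by $\sigma(x_i)=x_{i+1}$ (indices in $\mathbb{Z}_n$). Let $\omega$ be a primitive $n$th root of unity and $R_j=\{a\in A\mid\sigma(a)=\omega^{-j}a\}$ for $j\in\mathbb{Z}_n$; $R_jA$ is the right ideal generated by $R_j$. $E=(A\#C_n)/(e_0)$ where $e_0=\frac1n\sum_{g\in C_n}g$, $e_\alpha=\frac1n\sum_{i=0}^{n-1}(\omega^\alpha\sigma)^i$, and $\bar e_j$ is the image of $e_j$ in $E$. *)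

(* Defs.v *)
From HB Require Import structures.
From mathcomp Require Import all_boot all_order all_algebra.
Set Implicit Arguments. Unset Strict Implicit. Unset Printing Implicit Defensive.
Import Order.TTheory GRing.Theory Num.Theory.
Local Open Scope ring_scope.

(* The skew polynomial ring A = k_{-1}[x_0,...,x_{n-1}], degree by degree.
   A monomial of degree d is x^a = x_0^{a_0} x_1^{a_1} ... x_{n-1}^{a_{n-1}}
   (ordered product), with a an exponent vector of total degree d; these
   monomials form a basis of the homogeneous component A_d. *)
Definition mono (n d : nat) :=
  {a : {ffun 'I_n -> 'I_d.+1} | (\sum_(i < n) (a i : nat) == d)%N}.

Definition expo n d (m : mono n d) (i : 'I_n) : nat := val (val m i).

Section SkewPoly.
Variables (K : fieldType) (n : nat).

(* A_d : coordinates in the monomial basis. *)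
Definition Adeg (d : nat) := {ffun mono n d -> K^o}.

(* the basis vector x^c of A_d, for c : 'I_n -> nat (it is 0 if c does not
   have total degree d, since then no monomial of degree d has exponent c) *)
Definition X d (c : 'I_n -> nat) : Adeg d :=
  [ffun m : mono n d => ([forall i, expo m i == c i])%:R].

(* x^a x^b = (-1)^{sum_{i > k} a_i b_k} x^{a+b}, from x_i x_k = - x_k x_i *)
Definition msign e f (a : mono n e) (b : mono n f) : K :=
  (-1) ^+ (\sum_(i < n) \sum_(k < n | (k < i)%N) expo a i * expo b k)%N.

(* product A_e x A_f -> A_d (meaningful for d = e + f) *)
Definition mulA e f d (p : Adeg e) (q : Adeg f) : Adeg d :=
  \sum_(a : mono n e) \sum_(b : mono n f)
     (p a * q b * msign a b) *: X d (fun i => expo a i + expo b i).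

(* A graded algebra automorphism permuting the variables, x_i |-> x_{pi i}:
   pi(x^a) = x_{pi 0}^{a_0} ... x_{pi (n-1)}^{a_{n-1}}; reordering the blocks
   into normal form gives the sign (-1)^{sum over inversions i<k, pi i > pi k
   of a_i a_k}, and the exponent vector b with b_{pi i} = a_i. *)
Definition perm_sign (pi : 'I_n -> 'I_n) d (a : mono n d) : K :=
  (-1) ^+ (\sum_(i < n) \sum_(k < n | (i < k)%N && (pi k < pi i)%N)
             expo a i * expo a k)%N.

Definition permA_fun (pi : 'I_n -> 'I_n) (pinv : 'I_n -> 'I_n) d
  (p : Adeg d) : Adeg d :=
  \sum_(a : mono n d) (p a * perm_sign pi a) *: X d (fun i => expo a (pinv i)).

End SkewPoly.

(* the generator sigma of C_n: x_i |-> x_{i+1} (indices mod n) *)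
Definition succ_mod n (i : 'I_n) : 'I_n := ordS i.
Definition pred_mod n (i : 'I_n) : 'I_n := ord_pred i.

Definition sigmaA (K : fieldType) n d : 'End(Adeg K n d) :=
  linfun (permA_fun (@succ_mod n) (@pred_mod n) (d := d)).

Definition Rdeg (K : fieldType) n (w : K) (j e : nat) : {vspace Adeg K n e} :=
  lker (sigmaA K n e - (w ^- j) *: \1)%VF.

(* degree d component of the right ideal R_j A:
   sum over e <= d of the span of the products r * x^b, with r running over
   a basis of (R_j)_e and x^b over the monomials of degree d - e. *)
Definition RAdeg (K : fieldType) n (w : K) (j d : nat) : {vspace Adeg K n d} :=
  (\sum_(e < d.+1)
     <<[seq mulA d r (X K (d - e) (expo b))
        | r <- (vbasis (Rdeg n w j e) : seq _), b <- enum [set: mono n (d - e)]]>>)%VS.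

Definition qdim (K : fieldType) n (w : K) (j d : nat) : nat :=
  (\dim (fullv : {vspace Adeg K n d}) - \dim (RAdeg n w j d))%N.

(* Main.v *)
Require Import Defs.
From HB Require Import structures.
From mathcomp Require Import all_boot all_order all_algebra zify ring.
Import Defs.
Set Implicit Arguments. Unset Strict Implicit. Unset Printing Implicit Defensive.
Import Order.TTheory GRing.Theory Num.Theory.
Local Open Scope ring_scope.

Section S.
Variables (K : fieldType) (n : nat).

Lemma expo_inj d (m1 m2 : mono n d) : expo m1 =1 expo m2 -> m1 = m2.
Proof.
move=> H; apply: val_inj; apply/ffunP=> i; apply: val_inj; exact: H.
Qed.

Lemma sum_le (c : 'I_n -> nat) i : (c i <= \sum_(k < n) c k)%N.
Proof. by rewrite (bigD1 i) //= leq_addr. Qed.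

Definition mkmono d (c : 'I_n -> nat) (H : (\sum_(i < n) c i == d)%N) : mono n d.
Proof.
refine (exist _ [ffun i => inord (c i)] _).
apply/eqP; apply: etrans (eqP H); apply: eq_bigr => i _.
rewrite ffunE inordK // ltnS -(eqP H); exact: sum_le.
Defined.

Lemma mkmonoE d c H i : expo (@mkmono d c H) i = c i.
Proof.
rewrite /expo /= ffunE inordK // ltnS -(eqP H); exact: sum_le.
Qed.

Lemma expo_sum d (m : mono n d) : (\sum_(i < n) expo m i = d)%N.
Proof. by case: m => a /= H; apply/eqP. Qed.

Lemma XE d c (m : mono n d) : X K d c m = ([forall i, expo m i == c i])%:R.
Proof. by rewrite ffunE. Qed.

End S.
Section S2.
Variables (K : fieldType) (n : nat).
Lemma ffZ d (k : K) (p : Adeg K n d) m : (k *: p) m = k * p m.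
Proof. by rewrite ffunE. Qed.
Lemma ffD d (p q : Adeg K n d) m : (p + q) m = p m + q m.
Proof. by rewrite ffunE. Qed.
End S2.
Section S3.
Variables (K : fieldType) (n : nat).

Lemma pm_sum d (f : 'I_n -> 'I_n) (fi : injective f) (m : mono n d) :
  (\sum_(i < n) expo m (f i) == d)%N.
Proof.
have := reindex_inj fi (op:=addn) (x:=0%N) (P:=xpredT) (F:=expo m).
by move=> /= <-; rewrite expo_sum.
Qed.

Definition pm d f (fi : injective f) (m : mono n d) : mono n d :=
  mkmono (pm_sum fi m).

Lemma pmE d f fi (m : mono n d) i : expo (@pm d f fi m) i = expo m (f i).
Proof. by rewrite mkmonoE. Qed.

Variables (f g : 'I_n -> 'I_n) (fK : cancel f g) (gK : cancel g f).
Let fi := can_inj fK.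
Let gi := can_inj gK.

Lemma permAE d (p : Adeg K n d) m :
  permA_fun f g p m = p (pm fi m) * perm_sign K f (pm fi m).
Proof.
rewrite sum_ffunE (bigD1 (pm fi m)) //= ffZ XE.
have -> : [forall i, expo m i == expo (pm fi m) (g i)].
  by apply/forallP => i; rewrite pmE gK.
rewrite mulr1 big1 ?addr0 // => a Ha.
rewrite ffZ XE; case: forallP => [H|]; last by rewrite mulr0.
case/eqP: Ha; apply: expo_inj => i; by rewrite pmE (eqP (H (f i))) fK.
Qed.
End S3.
Local Close Scope ring_scope.
Section Par.
Variable n : nat.
Implicit Types x a b : 'I_n -> 'I_n -> nat.

Definition T x a := (\sum_(i < n) \sum_(k < n) x i k * a i k)%N.

Lemma odd_sumI (I : finType) (F : I -> nat) :
  odd (\sum_(i : I) F i) = \big[addb/false]_(i : I) odd (F i).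
Proof. exact: (big_morph odd oddD (erefl (odd 0))). Qed.

Lemma T_odd x a b : (forall i k, odd (a i k) = odd (b i k)) -> odd (T x a) = odd (T x b).
Proof.
move=> H; rewrite /T !odd_sumI; apply: eq_bigr => i _; rewrite !odd_sumI.
by apply: eq_bigr => k _; rewrite !oddM H.
Qed.

Lemma T_add x a b : T x (fun i k => a i k + b i k)%N = (T x a + T x b)%N.
Proof.
rewrite /T -big_split; apply: eq_bigr => i _ /=; rewrite -big_split.
by apply: eq_bigr => k _; rewrite mulnDr.
Qed.

Lemma T_swap x a : T (fun i k => x k i) (fun i k => a k i) = T x a.
Proof. by rewrite /T exchange_big. Qed.

Lemma T_reindex x a (h : 'I_n -> 'I_n) (hi : injective h) :
  T (fun i k => x (h i) (h k)) (fun i k => a (h i) (h k)) = T x a.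
Proof.
rewrite /T (reindex_inj hi (P:=xpredT) (F:=fun i => \sum_(k < n) x i k * a i k)%N).
apply: eq_bigr => i _.
by rewrite (reindex_inj hi (P:=xpredT) (F:=fun k => x (h i) k * a (h i) k)%N).
Qed.

Lemma T_ext x a b : (forall i k, a i k = b i k) -> T x a = T x b.
Proof. by move=> H; rewrite /T; apply: eq_bigr=> i _; apply: eq_bigr => k _; rewrite H. Qed.

Lemma T_extx x y a : (forall i k, x i k = y i k) -> T x a = T y a.
Proof. by move=> H; rewrite /T; apply: eq_bigr=> i _; apply: eq_bigr => k _; rewrite H. Qed.

Lemma sum_cond (P : 'I_n -> bool) (F : 'I_n -> nat) :
  (\sum_(k < n | P k) F k = \sum_(k < n) F k * P k)%N.
Proof. by rewrite big_mkcond; apply: eq_bigr => k _; case: (P k); rewrite ?muln1 ?muln0. Qed.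

Definition ps (f : 'I_n -> 'I_n) (c : 'I_n -> nat) :=
  (\sum_(i < n) \sum_(k < n | (i < k)%N && (f k < f i)%N) c i * c k)%N.
Definition ms (c c' : 'I_n -> nat) :=
  (\sum_(i < n) \sum_(k < n | (k < i)%N) c i * c' k)%N.

Lemma psT f c : ps f c = T (fun i k => c i * c k)%N (fun i k => ((i < k)%N && (f k < f i)%N) : nat).
Proof. by rewrite /ps /T; apply: eq_bigr => i _; rewrite sum_cond. Qed.
Lemma msT c c' : ms c c' = T (fun i k => c i * c' k)%N (fun i k => (k < i)%N : nat).
Proof. by rewrite /ms /T; apply: eq_bigr => i _; rewrite sum_cond. Qed.

End Par.
Section Par2.
Variable n : nat.
Variables (f g : 'I_n -> 'I_n) (fK : cancel f g) (gK : cancel g f).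

Lemma T_addx (x y : 'I_n -> 'I_n -> nat) a :
  T (fun i k => x i k + y i k)%N a = (T x a + T y a)%N.
Proof.
rewrite /T -big_split; apply: eq_bigr => i _ /=; rewrite -big_split.
by apply: eq_bigr => k _; rewrite mulnDl.
Qed.

Lemma finj_neq i k : i != k -> (f i : nat) != f k.
Proof.
move=> H; apply/negP => /eqP E; move/negP: H; apply; apply/eqP.
by apply: (can_inj fK); apply: val_inj.
Qed.

Lemma psM c c' :
  odd (ps f (fun i => c i + c' i)%N + ms c c') =
  odd (ps f c + ps f c' + ms (fun i => c (g i)) (fun i => c' (g i))).
Proof.
rewrite !psT !msT.
set al := fun i k : 'I_n => ((i < k)%N && (f k < f i)%N) : nat.
have -> : T (fun i k : 'I_n => (c i + c' i) * (c k + c' k))%N al =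
   (T (fun i k => c i * c k) al + T (fun i k => c' i * c' k) al +
   (T (fun i k => c i * c' k) al + T (fun i k : 'I_n => c k * c' i) al))%N.
  rewrite -!T_addx; rewrite /T; apply: eq_bigr => i _; apply: eq_bigr => k _ /=.
  rewrite mulnDl !mulnDr (mulnC (c' i) (c k)).
  set A := (c i * c k)%N. set B := (c i * c' k)%N. set C := (c k * c' i)%N. set D := (c' i * c' k)%N.
  lia.


have E : T (fun i k : 'I_n => c k * c' i)%N al = T (fun i k : 'I_n => c i * c' k)%N (fun i k => al k i)
  := T_swap (fun i k : 'I_n => c i * c' k)%N (fun i k => al k i).
rewrite E.
rewrite -(T_reindex (fun i k => c (g i) * c' (g k))%N (fun i k => (k < i)%N : nat) (can_inj fK)) /=.
rewrite -!addnA !oddD; congr (_ (+) (_ (+) _)).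
rewrite -!oddD -!T_add.
rewrite (@T_extx _ (fun i k => c (g (f i)) * c' (g (f k)))%N (fun i k => c i * c' k)%N); last by move=> i k; rewrite !fK.
apply: T_odd => i k; rewrite /al /=.
have := @finj_neq i k.
case: (ltngtP i k) => [lt|lt|eq] /=.
- by rewrite !addn0 ?add0n; case: (f k < f i)%N.
- have H : i != k by rewrite -val_eqE /= gtn_eqF.
  move=> /(_ H).
  by case: (ltngtP (f i) (f k)).
- have -> : i = k by apply: val_inj.
  by rewrite ltnn.
Qed.
End Par2.
Section Par3.
Variable n : nat.
Variables (f h hk : 'I_n -> 'I_n) (fi : injective f) (hK : cancel h hk) (kK : cancel hk h).

Lemma inj_neq (u : 'I_n -> 'I_n) (ui : injective u) i k : i != k -> (u i : nat) != u k.
Proof.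
move=> H; apply/negP => /eqP E; move/negP: H; apply; apply/eqP.
by apply: ui; apply: val_inj.
Qed.

Lemma psC c :
  odd (ps (fun i => f (h i)) c) = odd (ps h c + ps f (fun i => c (hk i))).
Proof.
rewrite !psT.
rewrite -(T_reindex (fun i k => c (hk i) * c (hk k))%N
   (fun i k => ((i < k)%N && (f k < f i)%N) : nat) (can_inj hK)) /=.
rewrite (@T_extx _ (fun i k => c (hk (h i)) * c (hk (h k)))%N (fun i k => c i * c k)%N); last by move=> i k; rewrite !hK.
set x := (fun i k : 'I_n => c i * c k)%N.
set ga := (fun i k : 'I_n => ((h i < h k)%N && (f (h k) < f (h i))%N) : nat).
have -> : T x ga = (T x (fun i k => (i < k)%N * ga i k) + T x (fun i k => (i < k)%N * ga k i))%N.
  have -> : T x (fun i k => (i < k)%N * ga k i) = T x (fun i k => (k < i)%N * ga i k).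
    rewrite -(T_swap x (fun i k => (i < k)%N * ga k i)%N).
    apply: T_extx => i k; by rewrite /x mulnC.
  rewrite -T_add; apply: T_ext => i k.
  rewrite /ga; case: (ltngtP i k) => [lt|lt|eq] /=; rewrite ?mul0n ?mul1n ?addn0 //.
  have -> : i = k by apply: val_inj.
  by rewrite ltnn.
rewrite -!T_add; apply: T_odd => i k; rewrite /ga /=.
have := @inj_neq _ (can_inj hK) i k; have := @inj_neq _ fi (h i) (h k).
case: (ltngtP i k) => [lt|lt|eq] /=; rewrite ?mul0n ?mul1n ?addn0 ?add0n //.
have H : i != k by rewrite -val_eqE /= ltn_eqF.
move=> H1 /(_ H) H2; move: (H1 H2); move: H2.
by case: (ltngtP (h i) (h k)); case: (ltngtP (f (h i)) (f (h k))).
Qed.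
End Par3.

Section Lin.
Variables (K : fieldType) (n : nat).
Local Open Scope ring_scope.

Lemma perm_signE (f : 'I_n -> 'I_n) d (a : mono n d) : perm_sign K f a = (-1) ^+ ps f (expo a).
Proof. by []. Qed.
Lemma msignE e e' (a : mono n e) (b : mono n e') :
  msign K a b = (-1) ^+ ms (expo a) (expo b).
Proof. by []. Qed.

Lemma ps_ext (f : 'I_n -> 'I_n) (c c' : 'I_n -> nat) : (forall i, c i = c' i) -> ps f c = ps f c'.
Proof.
by move=> H; rewrite /ps; apply: eq_bigr => i _; apply: eq_bigr => k _; rewrite !H.
Qed.
Lemma ms_ext (c1 c2 c1' c2' : 'I_n -> nat) : (forall i, c1 i = c1' i) -> (forall i, c2 i = c2' i) ->
  ms c1 c2 = ms c1' c2'.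
Proof.
by move=> H1 H2; rewrite /ms; apply: eq_bigr => i _; apply: eq_bigr => k _; rewrite H1 H2.
Qed.

Lemma mulAE e e' d (p : Adeg K n e) (q : Adeg K n e') (m : mono n d) :
  mulA d p q m = \sum_(a : mono n e) \sum_(b : mono n e')
     p a * q b * msign K a b * ([forall i, expo m i == expo a i + expo b i])%:R.
Proof.
rewrite sum_ffunE; apply: eq_bigr => a _; rewrite sum_ffunE; apply: eq_bigr => b _.
by rewrite ffZ XE.
Qed.

Lemma permA_comp (f g h hk : 'I_n -> 'I_n) (fK : cancel f g) (gK : cancel g f)
  (hK : cancel h hk) (kK : cancel hk h) d (p : Adeg K n d) :
  permA_fun f g (permA_fun h hk p) = permA_fun (fun i => f (h i)) (fun i => hk (g i)) p.
Proof.
have fhK : cancel (fun i => f (h i)) (fun i => hk (g i)) by move=> i; rewrite fK hK.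
have khK : cancel (fun i => hk (g i)) (fun i => f (h i)) by move=> i; rewrite kK gK.
apply/ffunP => m.
rewrite (permAE fK gK) (permAE hK kK) (permAE fhK khK).
have E : pm (can_inj hK) (pm (can_inj fK) m) = pm (can_inj fhK) m.
  by apply: expo_inj => i; rewrite !pmE.
rewrite E -mulrA; congr (_ * _).
rewrite !perm_signE -exprD -signr_odd (psC (can_inj fK) hK) signr_odd.
congr ((-1) ^+ (_ + _)).
by apply: ps_ext => i; rewrite !pmE kK.
Qed.


Lemma pm_inj d (f : 'I_n -> 'I_n) (fi : injective f) (fs : 'I_n -> 'I_n) (fsK : cancel fs f) :
  injective (@pm n d f fi).
Proof.
move=> x y E; apply: expo_inj => i.
by rewrite -(fsK i) -!(pmE fi) E.
Qed.

Lemma pm_can d (f g : 'I_n -> 'I_n) (fK : cancel f g) (gK : cancel g f) (a : mono n d) :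
  pm (can_inj fK) (pm (can_inj gK) a) = a.
Proof. by apply: expo_inj => i; rewrite !pmE fK. Qed.

Lemma permA_mul (f g : 'I_n -> 'I_n) (fK : cancel f g) (gK : cancel g f) e e' d
  (p : Adeg K n e) (q : Adeg K n e') :
  permA_fun f g (mulA d p q) = mulA d (permA_fun f g p) (permA_fun f g q).
Proof.
apply/ffunP => m; rewrite (permAE fK gK) !mulAE big_distrl /=.
rewrite [RHS](reindex_inj (@pm_inj _ _ (can_inj gK) _ fK)) /=.
apply: eq_bigr => a _; rewrite big_distrl /=.
rewrite [RHS](reindex_inj (@pm_inj _ _ (can_inj gK) _ fK)) /=.
apply: eq_bigr => b _.
rewrite !(permAE fK gK) !pm_can.
have -> : [forall i, expo m i == expo (pm (can_inj gK) a) i + expo (pm (can_inj gK) b) i]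
   = [forall i, expo (pm (can_inj fK) m) i == expo a i + expo b i].
  apply/forallP/forallP => H i.
    by rewrite pmE (eqP (H (f i))) !pmE fK.
  by rewrite !pmE; have := H (g i); rewrite pmE gK.
case: forallP => H; last by rewrite !mulr0 mul0r.
rewrite !mulr1.
have E : (-1) ^+ ps f (expo (pm (can_inj fK) m)) * msign K a b =
   perm_sign K f a * perm_sign K f b * msign K (pm (can_inj gK) a) (pm (can_inj gK) b) :> K.
  rewrite !msignE !perm_signE -!exprD -signr_odd.
  rewrite (ps_ext f (c' := fun i => expo a i + expo b i)%N); last by move=> i; apply/eqP.
  rewrite (psM fK) signr_odd; congr ((-1) ^+ (_ + _)).
  by apply: ms_ext => i; rewrite pmE.
transitivity (p a * q b * ((-1) ^+ ps f (expo (pm (can_inj fK) m)) * msign K a b)).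
  by rewrite perm_signE; ring.
rewrite E; ring.
Qed.


Lemma permA_linear (f g : 'I_n -> 'I_n) d : linear (@permA_fun K n f g d).
Proof.
move=> a p q; rewrite /permA_fun scaler_sumr -big_split; apply: eq_bigr => x _ /=.
by rewrite ffD ffZ scalerA -scalerDl mulrDl mulrA.
Qed.

End Lin.

Section Inst.
Variables (K : fieldType) (n : nat) (f g : 'I_n -> 'I_n) (d : nat).
HB.instance Definition _ :=
  GRing.isLinear.Build K (Adeg K n d) (Adeg K n d) *:%R (@permA_fun K n f g d)
    (@permA_linear K n f g d).
End Inst.

Lemma sigmaAE (K : fieldType) n d (v : Adeg K n d) :
  sigmaA K n d v = permA_fun (@succ_mod n) (@pred_mod n) v.
Proof. by rewrite /sigmaA lfunE. Qed.

Section Lin2.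
Variables (K : fieldType) (n : nat).
Local Open Scope ring_scope.

Lemma ps_extf (f f' : 'I_n -> 'I_n) c : f =1 f' -> ps f c = ps f' c.
Proof.
by move=> E; rewrite /ps; apply: eq_bigr => i _; apply: eq_bigl => k; rewrite !E.
Qed.

Lemma permA_ext (f g f' g' : 'I_n -> 'I_n) (fK : cancel f g) (gK : cancel g f)
  (f'K : cancel f' g') (g'K : cancel g' f') (E : f =1 f') d (p : Adeg K n d) :
  permA_fun f g p = permA_fun f' g' p.
Proof.
apply/ffunP => m; rewrite (permAE fK gK) (permAE f'K g'K).
have -> : pm (can_inj fK) m = pm (can_inj f'K) m by apply: expo_inj => i; rewrite !pmE E.
by rewrite !perm_signE (ps_extf _ E).
Qed.

Lemma permA_id d (p : Adeg K n d) : permA_fun id id p = p.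
Proof.
have idK : cancel (@id 'I_n) id by [].
apply/ffunP => m; rewrite (permAE idK idK).
have -> : pm (can_inj idK) m = m by apply: expo_inj => i; rewrite !pmE.
rewrite perm_signE /ps big1 ?mulr1 // => i _; rewrite big1 // => k /andP [h1 h2].
by move: (ltn_trans h1 h2); rewrite ltnn.
Qed.

Lemma mulA_addl e e' d a (p p' : Adeg K n e) (q : Adeg K n e') :
  mulA d (a *: p + p') q = a *: mulA d p q + mulA d p' q.
Proof.
apply/ffunP => m; rewrite ffD ffZ !mulAE mulr_sumr -big_split; apply: eq_bigr => x _ /=.
rewrite mulr_sumr -big_split; apply: eq_bigr => y _ /=.
rewrite ffD ffZ; ring.
Qed.

Lemma mulA0l e e' d (q : Adeg K n e') : mulA d (0 : Adeg K n e) q = 0.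
Proof.
apply/ffunP => m; rewrite mulAE ffunE big1 // => x _; rewrite big1 // => y _.
by rewrite ffunE !mul0r.
Qed.

Lemma mulA_scaler e e' d a (p : Adeg K n e) (q : Adeg K n e') :
  mulA d p (a *: q) = a *: mulA d p q.
Proof.
apply/ffunP => m; rewrite ffZ !mulAE mulr_sumr; apply: eq_bigr => x _ /=.
rewrite mulr_sumr; apply: eq_bigr => y _ /=.
rewrite ffZ; ring.
Qed.

Lemma mulA_suml e e' d I (r : seq I) (F : I -> Adeg K n e) (q : Adeg K n e') :
  mulA d (\sum_(i <- r) F i) q = \sum_(i <- r) mulA d (F i) q.
Proof.
elim: r => [|x r IH]; first by rewrite !big_nil mulA0l.
rewrite !big_cons; have := mulA_addl d 1 (F x) (\sum_(i <- r) F i) q.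
by rewrite !scale1r IH.
Qed.

Lemma permA_X (f g : 'I_n -> 'I_n) (fK : cancel f g) (gK : cancel g f) e (b : mono n e) :
  permA_fun f g (X K e (expo b)) =
  perm_sign K f b *: X K e (expo (pm (can_inj gK) b)).
Proof.
apply/ffunP => m; rewrite (permAE fK gK) ffZ !XE.
have -> : [forall i, expo m i == expo (pm (can_inj gK) b) i] =
          [forall i, expo (pm (can_inj fK) m) i == expo b i].
  apply/forallP/forallP => H i.
    by rewrite pmE (eqP (H (f i))) pmE fK.
  by rewrite pmE; have := H (g i); rewrite pmE gK.
case: forallP => H; last by rewrite mul0r mulr0.
have -> : pm (can_inj fK) m = b by apply: expo_inj => i; apply/eqP.
by rewrite mul1r mulr1.
Qed.

End Lin2.

Section RA.
Variables (K : fieldType) (n : nat) (w : K).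
Local Open Scope ring_scope.

Lemma inS j e d (r : Adeg K n e) (b : mono n (d - e)) :
  r \in Rdeg n w j e ->
  mulA d r (X K (d - e) (expo b)) \in
  <<[seq mulA d r0 (X K (d - e) (expo b0))
        | r0 <- (vbasis (Rdeg n w j e) : seq _), b0 <- enum [set: mono n (d - e)]]>>%VS.
Proof.
move=> Hr; rewrite (coord_vbasis Hr) mulA_suml; apply: memv_suml => i _.
rewrite -[_ *: _]addr0 mulA_addl mulA0l addr0; apply: memvZ.
apply: memv_span; apply/allpairsP; exists ((vbasis (Rdeg n w j e))`_i, b); split => //.
  by apply: mem_nth; rewrite size_tuple.
by rewrite mem_enum inE.
Qed.

Lemma RA_sub j j' (f g : 'I_n -> 'I_n) (fK : cancel f g) (gK : cancel g f)
  (H : forall e v, v \in Rdeg n w j e -> permA_fun f g v \in Rdeg n w j' e) d :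
  (linfun (@permA_fun K n f g d) @: RAdeg n w j d <= RAdeg n w j' d)%VS.
Proof.
rewrite /RAdeg limg_sum; apply/subv_sumP => e _; apply: (sumv_sup e) => //.
rewrite limg_span; apply/span_subvP => x /mapP [y /allpairsP [[r b] [Hr Hb ->]] ->] /=.
rewrite lfunE /= (permA_mul fK gK) (permA_X _ fK gK) mulA_scaler; apply: memvZ.
apply: inS; apply: H; exact: vbasis_mem.
Qed.

End RA.

Section Dim.
Variables (K : fieldType) (n : nat) (w : K).
Local Open Scope ring_scope.

Lemma permA_inv (f g : 'I_n -> 'I_n) (fK : cancel f g) (gK : cancel g f) d (p : Adeg K n d) :
  permA_fun g f (permA_fun f g p) = p.
Proof.
rewrite (permA_comp gK fK fK gK).
have c1 : cancel (fun i => g (f i)) (fun i => g (f i)) by move=> i; rewrite !fK.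
have c2 : cancel (@id 'I_n) id by [].
by rewrite (permA_ext c1 c1 c2 c2 fK) permA_id.
Qed.

Lemma dim_le j j' (f g : 'I_n -> 'I_n) (fK : cancel f g) (gK : cancel g f)
  (H : forall e v, v \in Rdeg n w j e -> permA_fun f g v \in Rdeg n w j' e) d :
  (\dim (RAdeg n w j d) <= \dim (RAdeg n w j' d))%N.
Proof.
set F := linfun (@permA_fun K n f g d).
have Hk : lker F = 0%VS.
  apply/eqP/lker0P => x y; rewrite /F !lfunE /= => E.
  by rewrite -(permA_inv fK gK x) E permA_inv.
have L := limg_dim_eq (f := F) (U := RAdeg n w j d).
rewrite Hk capv0 in L.
have S : (F @: RAdeg n w j d <= RAdeg n w j' d)%VS by exact: RA_sub.
have S2 := dimvS S.
rewrite (L erefl) in S2. exact: S2.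
Qed.
End Dim.

Section Main.
Variables (n : nat) (n_gt0 : (0 < n)%N).

Definition mulI (u : nat) (i : 'I_n) : 'I_n := Ordinal (ltn_pmod (u * i) n_gt0).
Definition succk k (i : 'I_n) : 'I_n := iter k (@succ_mod n) i.
Definition predk k (i : 'I_n) : 'I_n := iter k (@pred_mod n) i.

Lemma succkK k : cancel (succk k) (predk k).
Proof.
elim: k => [|k IH] i; first by [].
rewrite /predk /succk [iter k.+1 (@pred_mod n) _]iterSr [iter k.+1 (@succ_mod n) _]iterS.
rewrite /succ_mod /pred_mod ordSK; exact: IH.
Qed.

Lemma predkK k : cancel (predk k) (succk k).
Proof.
elim: k => [|k IH] i; first by [].
rewrite /predk /succk [iter k.+1 (@succ_mod n) _]iterSr [iter k.+1 (@pred_mod n) _]iterS.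
rewrite /succ_mod /pred_mod ord_predK; exact: IH.
Qed.

Lemma succkE k i : (succk k i : nat) = ((i + k) %% n)%N.
Proof.
elim: k => [|k IH] /=; first by rewrite addn0 modn_small.
by rewrite -addn1 IH modnDml -addnA addn1.
Qed.

Lemma mulIK u u' : ((u * u') %% n = 1)%N -> cancel (mulI u) (mulI u').
Proof.
move=> H i; apply: val_inj => /=.
by rewrite modnMmr mulnA -modnMml (mulnC u') H mul1n modn_small.
Qed.

Lemma succ_mulI u u' : ((u * u') %% n = 1)%N ->
  forall i, succ_mod (mulI u i) = mulI u (succk u' i).
Proof.
move=> H i; apply: val_inj => /=.
by rewrite succkE modnMmr mulnDr -modnDmr H -addn1 modnDml.
Qed.

End Main.

Lemma comp_cancel n (f g h hk : 'I_n -> 'I_n) (fK : cancel f g) (hK : cancel h hk) :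
  cancel (fun i => f (h i)) (fun i => hk (g i)).
Proof. by move=> i; rewrite fK hK. Qed.

Section Eig.
Variables (K : fieldType) (n : nat) (n_gt0 : (0 < n)%N) (w : K).
Local Open Scope ring_scope.

Lemma memR j e (v : Adeg K n e) :
  (v \in Rdeg n w j e) = (permA_fun (@succ_mod n) (@pred_mod n) v == w ^- j *: v).
Proof.
by rewrite memv_ker add_lfunE opp_lfunE scale_lfunE id_lfunE sigmaAE subr_eq0.
Qed.

Lemma permA_scale (f g : 'I_n -> 'I_n) d a (v : Adeg K n d) :
  permA_fun f g (a *: v) = a *: permA_fun f g v.
Proof. exact: linearZ. Qed.

Lemma succk_eig c k e (v : Adeg K n e) :
  permA_fun (@succ_mod n) (@pred_mod n) v = c *: v ->
  permA_fun (succk k) (predk k) v = c ^+ k *: v.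
Proof.
move=> Hv; elim: k => [|k IH].
  have c2 : cancel (@id 'I_n) id by [].
  by rewrite (permA_ext (succkK 0) (predkK 0) c2 c2 (fun i => erefl)) permA_id scale1r.
have sK := @ordSK n; have pK := @ord_predK n.
rewrite (permA_ext (succkK k.+1) (predkK k.+1) (comp_cancel sK (succkK k))
   (comp_cancel (predkK k) pK) (fun i => erefl)).
rewrite -(permA_comp sK pK (succkK k) (predkK k)) IH permA_scale Hv scalerA exprSr.
by [].
Qed.

Lemma eig_map u u' (H : ((u * u') %% n = 1)%N) (H' : ((u' * u) %% n = 1)%N) j e (v : Adeg K n e) :
  v \in Rdeg n w j e ->
  permA_fun (mulI n_gt0 u) (mulI n_gt0 u') v \in Rdeg n w (j * u') e.
Proof.
rewrite !memR => /eqP Hv.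
have fK := mulIK n_gt0 H; have gK := mulIK n_gt0 H'.
have sK := @ordSK n; have pK := @ord_predK n.
rewrite (permA_comp sK pK fK gK).
rewrite (permA_ext (comp_cancel sK fK) (comp_cancel gK pK)
   (comp_cancel fK (succkK u')) (comp_cancel (predkK u') gK) (succ_mulI n_gt0 H)).
rewrite -(permA_comp fK gK (succkK u') (predkK u')) (succk_eig u' Hv) permA_scale.
by rewrite exprVn exprM.
Qed.

End Eig.

Local Open Scope ring_scope.
Lemma RA_eq (K : fieldType) n (w : K) j1 j2 d :
  w ^+ j1 = w ^+ j2 -> RAdeg n w j1 d = RAdeg n w j2 d.
Proof. by move=> E; rewrite /RAdeg; apply: eq_bigr => e _; rewrite /Rdeg E. Qed.


Lemma key (K : fieldType) n (n_ge2 : (2 <= n)%N) (w : K) (w_prim : n.-primitive_root w)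
  lam (lam_gt0 : (0 < lam)%N) (cop : coprime lam n) j d :
  qdim n w j d = qdim n w ((lam * j) %% n) d.
Proof.
have n_gt0 : (0 < n)%N by apply: leq_trans n_ge2.
case: (egcdnP n lam_gt0) => mu kn Hmu _.
have H1 : ((mu * lam) %% n = 1)%N.
  by rewrite Hmu (eqP cop) modnMDl modn_small.
have H2 : ((lam * mu) %% n = 1)%N by rewrite mulnC.
have le1 : (\dim (RAdeg n w j d) <= \dim (RAdeg n w (j * lam) d))%N.
  apply: (dim_le (mulIK n_gt0 H1) (mulIK n_gt0 H2)) => e v.
  exact: (eig_map n_gt0 H1 H2).
have le2 : (\dim (RAdeg n w (j * lam) d) <= \dim (RAdeg n w (j * lam * mu) d))%N.
  apply: (dim_le (mulIK n_gt0 H2) (mulIK n_gt0 H1)) => e v.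
  exact: (eig_map n_gt0 H2 H1).
have E1 : w ^+ (j * lam * mu) = w ^+ j.
  apply/eqP; rewrite (eq_prim_root_expr w_prim).
  by rewrite -mulnA -modnMmr H2 muln1.
have E2 : w ^+ ((lam * j) %% n) = w ^+ (j * lam).
  by rewrite (prim_expr_mod w_prim) mulnC.
have R1 : RAdeg n w (j * lam * mu) d = RAdeg n w j d := RA_eq _ _ E1.
have R2 : RAdeg n w ((lam * j) %% n) d = RAdeg n w (j * lam) d := RA_eq _ _ E2.
have le2' : (\dim (RAdeg n w (j * lam) d) <= \dim (RAdeg n w j d))%N :=
  eq_ind _ (fun X => (\dim (RAdeg n w (j * lam) d) <= \dim X)%N) le2 _ R1.
have Ed : \dim (RAdeg n w j d) = \dim (RAdeg n w (j * lam) d).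
  by apply: anti_leq; apply/andP; split; [exact: le1 | exact: le2'].
have Ed2 := etrans Ed (f_equal (fun X => \dim X) (esym R2)).
rewrite /qdim; exact: (congr1 _ Ed2).
Qed.

Unset Implicit Arguments.

Theorem lemma3p4 (K : closedFieldType) (charK0 : [pchar K] =i pred0)
  (n : nat) (n_ge2 : (2 <= n)%N) (w : K) (w_prim : n.-primitive_root w)
  (lam : nat) (lam_gt0 : (0 < lam)%N) (lam_coprime : coprime lam n)
  (j : nat) (j_ge1 : (1 <= j)%N) (j_le : (j <= n - 1)%N) :
  (forall d : nat, qdim n w j d = qdim n w ((lam * j) %% n) d)
  /\ (prime n -> forall j' : nat, (2 <= j' <= n - 1)%N ->
        forall d : nat, qdim n w 1 d = qdim n w j' d).
Proof.
split.
  by move=> d; apply: key.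
move=> pn j' /andP [h1 h2] d.
have j'lt : (j' < n)%N by move: h2 n_ge2; clear; lia.
have j'gt0 : (0 < j')%N by apply: leq_trans h1.
have cop : coprime j' n.
  rewrite coprime_sym prime_coprime //; apply/negP => /(dvdn_leq j'gt0).
  by rewrite leqNgt j'lt.
have := key n_ge2 w_prim j'gt0 cop 1 d.
by rewrite muln1 modn_small.
Qed.
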